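(* Let $C$ be a linear completely regular $[n,k,2]_q$ code with covering radius $\rho=1$, and let $n_a$ be the number of codewords at distance one from any vector not in $C$. If $k<n-1$, then the set of coordinate positions $\{1,\dots,n\}$ can be partitioned into sets $X_1,\dots,X_{n/n_a}$, each of size $n_a$, such that every codeword of weight $2$ has its support contained in one of these sets.
   Context: Hamming distance; support of a vector = set of its nonzero coordinates; covering radius $\rho=\max_{\bf v}\min_{{\bf x}\in C}d({\bf v},{\bf x})$. $C$ is completely regular if for every vector ${\bf x}$, with $t=d({\bf x},C)$, the number of codewords at distance $i$ from ${\bf x}$ depends only on $t$ and $i$ (so $n_a$ is well defined). *)

(* Defs.v *)
From HB Require Import structures.
From mathcomp Require Import all_boot all_order all_algebra.
Set Implicit Arguments. Unset Strict Implicit. Unset Printing Implicit Defensive.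
Import GRing.Theory.
Local Open Scope ring_scope.

Section Codes.
Variables (F : finFieldType) (n : nat).

Definition supp (x : 'rV[F]_n) : {set 'I_n} := [set i | x 0 i != 0].

Definition wt (x : 'rV[F]_n) : nat := #|supp x|.
Definition hdist (x y : 'rV[F]_n) : nat := #|[set i | x 0 i != y 0 i]|.

(* distance from a vector to a code: min over codewords (C always contains 0) *)
Definition dist_code (C : {vspace 'rV[F]_n}) (v : 'rV[F]_n) : nat :=
  \big[minn/n]_(c : 'rV[F]_n | c \in C) hdist v c.

Definition cov_radius (C : {vspace 'rV[F]_n}) : nat :=
  \max_(v : 'rV[F]_n) dist_code C v.

Definition min_dist_eq (C : {vspace 'rV[F]_n}) (d : nat) : Prop :=
  (exists x y, [/\ x \in C, y \in C, x != y & hdist x y = d]) /\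
  (forall x y, x \in C -> y \in C -> x != y -> (d <= hdist x y)%N).

Definition n_at (C : {vspace 'rV[F]_n}) (x : 'rV[F]_n) (i : nat) : nat :=
  #|[set c : 'rV[F]_n | (c \in C) && (hdist x c == i)]|.

Definition completely_regular (C : {vspace 'rV[F]_n}) : Prop :=
  forall x y : 'rV[F]_n, dist_code C x = dist_code C y ->
    forall i, n_at C x i = n_at C y i.

End Codes.

(* Main.v *)
Require Import Defs.
From HB Require Import structures.
From mathcomp Require Import all_boot all_order all_algebra.
From mathcomp Require Import zify.
Set Implicit Arguments. Unset Strict Implicit. Unset Printing Implicit Defensive.
Import GRing.Theory.

Section Aux.
Variables (F : finFieldType) (n : nat) (C : {vspace 'rV[F]_n}).
Hypothesis md : forall x y, x \in C -> y \in C -> x != y -> (2 <= hdist x y)%N.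
Local Open Scope ring_scope.

Lemma hdist_wt (x y : 'rV[F]_n) : hdist x y = wt (x - y).
Proof.
rewrite /hdist /wt /supp; apply: eq_card => j; rewrite !inE !mxE.
by rewrite subr_eq0.
Qed.

Lemma wt_le1 c : c \in C -> (wt c <= 1)%N -> c = 0.
Proof.
move=> Hc Hw; apply/eqP; apply: contraTT Hw => nz.
have := md Hc (mem0v C) nz; rewrite hdist_wt subr0 -ltnNge; lia.
Qed.

Lemma supp_sub1 c j : c \in C -> supp c \subset [set j] -> c = 0.
Proof.
move=> Hc Hs; apply: wt_le1 => //; rewrite /wt.
by have := subset_leq_card Hs; rewrite cards1.
Qed.

Lemma notsupp (c : 'rV[F]_n) (j : 'I_n) : j \notin supp c -> c 0 j = 0.
Proof. by rewrite inE negbK => /eqP. Qed.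

Definition R (i j : 'I_n) : bool :=
  [exists c : 'rV[F]_n, [&& c \in C, c 0 i == 1 & supp c == [set i; j]]].

Lemma R_irr i : ~~ R i i.
Proof.
apply/existsP => -[c /and3P[Hc /eqP ci /eqP sc]].
have := supp_sub1 Hc (_ : supp c \subset [set i]).
rewrite sc setUid subxx => /(_ isT) c0.
by move: ci; rewrite c0 mxE => /eqP; rewrite eq_sym oner_eq0.
Qed.

Lemma R_neq i j : R i j -> i != j.
Proof. by apply: contraTneq => ->; apply: R_irr. Qed.

Lemma R_sym i j : R i j -> R j i.
Proof.
move=> Rij; have ij := R_neq Rij.
case/existsP: Rij => c /and3P[Hc /eqP ci /eqP sc].
have : j \in supp c by rewrite sc !inE eqxx orbT.
rewrite inE => cj.
apply/existsP; exists ((c 0 j)^-1 *: c); apply/and3P; split.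
- by rewrite memvZ.
- by rewrite mxE mulVf.
- apply/eqP; rewrite setUC -sc; apply/setP => t; rewrite !inE mxE.
  by rewrite mulf_eq0 invr_eq0 (negbTE cj).
Qed.

Lemma R_trans i j k : i != k -> R i j -> R j k -> R i k.
Proof.
move=> ik Rij Rjk; have ij := R_neq Rij; have jk := R_neq Rjk.
case/existsP: Rij => c1 /and3P[H1 /eqP c1i /eqP s1].
case/existsP: Rjk => c2 /and3P[H2 /eqP c2j /eqP s2].
have : j \in supp c1 by rewrite s1 !inE eqxx orbT.
rewrite inE => c1j.
have : k \in supp c2 by rewrite s2 !inE eqxx orbT.
rewrite inE => c2k.
have c2i : c2 0 i = 0 by apply: notsupp; rewrite s2 !inE negb_or ij ik.
apply/existsP; exists (c1 - c1 0 j *: c2); apply/and3P; split.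
- by rewrite memvB // memvZ.
- by rewrite !mxE c2i mulr0 subr0 c1i.
- apply/eqP/setP => t; rewrite !inE !mxE.
  have [->|ti] := eqVneq t i; first by rewrite c2i mulr0 subr0 c1i oner_eq0.
  have [->|tk] := eqVneq t k.
    rewrite (notsupp (c := c1) (j := k)); last by rewrite s1 !inE negb_or eq_sym ik eq_sym jk.
    by rewrite sub0r oppr_eq0 mulf_neq0.
  have [->|tj] := eqVneq t j; first by rewrite c2j mulr1 subrr eqxx.
  rewrite (notsupp (c := c1) (j := t)); last by rewrite s1 !inE negb_or ti tj.
  rewrite (notsupp (c := c2) (j := t)); last by rewrite s2 !inE negb_or tj tk.
  by rewrite mulr0 subrr eqxx.
Qed.

Definition E (i j : 'I_n) : bool := (i == j) || R i j.

Lemma E_sym i j : E i j -> E j i.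
Proof. by case/orP=> [/eqP->|/R_sym H]; rewrite /E ?eqxx ?H ?orbT. Qed.

Lemma E_trans i j k : E i j -> E j k -> E i k.
Proof.
case/orP=> [/eqP->//|Rij]; case/orP=> [/eqP<-|Rjk]; first by rewrite /E Rij orbT.
rewrite /E; have [//|ik] := eqVneq i k; exact: R_trans Rij Rjk.
Qed.

Lemma E_equiv : equivalence_rel E.
Proof.
move=> x y z; split; first by rewrite /E eqxx.
move=> Exy; apply/idP/idP => H; first exact: E_trans (E_sym Exy) H.
exact: E_trans Exy H.
Qed.

Definition ev (x : 'I_n) : 'rV[F]_n := \row_j ((x == j)%:R : F).

Definition fR (x y : 'I_n) : 'rV[F]_n :=
  odflt 0 [pick c : 'rV[F]_n | [&& c \in C, c 0 x == 1 & supp c == [set x; y]]].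

Lemma fRP x y : R x y -> [&& fR x y \in C, fR x y 0 x == 1 & supp (fR x y) == [set x; y]].
Proof.
rewrite /fR; case: pickP => [c Hc|H] //= /existsP[c]; by rewrite H.
Qed.

Lemma uniqR x y c c' : x != y -> c \in C -> c' \in C -> c 0 x = 1 -> c' 0 x = 1 ->
  supp c = [set x; y] -> supp c' = [set x; y] -> c = c'.
Proof.
move=> xy Hc Hc' cx cx' sc sc'; apply/eqP; rewrite -subr_eq0; apply/eqP.
apply: (@supp_sub1 _ y); first by rewrite memvB.
apply/subsetP => t; rewrite !inE !mxE.
have [->|tx] := eqVneq t x; first by rewrite cx cx' subrr eqxx.
have [//|ty] := eqVneq t y.
rewrite (notsupp (c := c) (j := t)); last by rewrite sc !inE negb_or tx ty.
rewrite (notsupp (c := c') (j := t)); last by rewrite sc' !inE negb_or tx ty.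
by rewrite subrr eqxx.
Qed.

Lemma ev_notin x : ev x \notin C.
Proof.
apply/negP => H.
have sub : supp (ev x) \subset [set x].
  by apply/subsetP => t; rewrite !inE mxE; case: (eqVneq x t); rewrite ?eqxx.
have := supp_sub1 H sub.
move=> /rowP /(_ x); rewrite !mxE eqxx => /eqP; by rewrite oner_eq0.
Qed.

Lemma count_block x : n_at C (ev x) 1 = #|[set y | E x y]|.
Proof.
have -> : [set y | E x y] = x |: [set y | R x y].
  by apply/setP => y; rewrite !inE /E eq_sym.
rewrite cardsU1 inE R_irr /=.
set A := [set y | R x y].
have inj : {in A &, injective (fR x)}.
  move=> y y'; rewrite !inE => Ry Ry' e.
  have /and3P[_ _ /eqP s] := fRP Ry; have /and3P[_ _ /eqP s'] := fRP Ry'.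
  rewrite e s' in s; have : y \in [set x; y'] by rewrite s !inE eqxx orbT.
  rewrite !inE.
  by rewrite eq_sym (negbTE (R_neq Ry)) /= => /eqP.
have zn : 0 \notin fR x @: A.
  apply/imsetP => -[y]; rewrite inE => Ry e.
  have /and3P[_ /eqP h _] := fRP Ry; move: h; rewrite -e mxE => /eqP.
  by rewrite eq_sym oner_eq0.
rewrite -(card_in_imset inj).
have -> : (1 + #|fR x @: A|)%N = #|0 |: fR x @: A| by rewrite cardsU1 zn.
rewrite /n_at; apply: eq_card => c; rewrite !inE.
apply/idP/idP.
- case/andP => Hc /eqP hd; have [->//|cnz] := eqVneq c 0; rewrite /=.
  move/eqP/cards1P: hd => [j0 Dj].
  have Dx : forall t, (t \in [set j0]) = (ev x 0 t != c 0 t) by move=> t; rewrite -Dj inE.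
  have cx : c 0 x = 1.
    apply/eqP; apply/negPn/negP => cx1.
    have : x \in [set j0] by rewrite Dx mxE eqxx eq_sym.
    rewrite inE => /eqP xj0; case/eqP: cnz; apply: (@supp_sub1 _ x Hc).
    apply/subsetP => t; rewrite !inE; have [//|tx] := eqVneq t x.
    have : t \notin [set j0] by rewrite inE -xj0.
    have xt : (x == t) = false by rewrite eq_sym (negbTE tx).
    by rewrite Dx negbK mxE xt => /eqP <-; rewrite eqxx.
  have j0x : j0 != x.
    apply/eqP => ej; have := set11 j0; rewrite Dx ej mxE eqxx cx eqxx //.
  have xj0f : (x == j0) = false by rewrite eq_sym (negbTE j0x).
  have sc : supp c = [set x; j0].
    apply/setP => t; rewrite !inE; have [->|tx] := eqVneq t x; first by rewrite cx oner_eq0.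
    have [->|tj] := eqVneq t j0.
      by have := set11 j0; rewrite Dx mxE xj0f eq_sym => ->.
    have : t \notin [set j0] by rewrite inE tj.
    have xt : (x == t) = false by rewrite eq_sym (negbTE tx).
    by rewrite Dx negbK mxE xt => /eqP <-; rewrite eqxx.
  have Rxj : R x j0 by apply/existsP; exists c; rewrite Hc cx sc !eqxx.
  apply/imsetP; exists j0; first by rewrite inE.
  have /and3P[H1 /eqP H2 /eqP H3] := fRP Rxj.
  by apply: (uniqR (x := x) (y := j0)) => //; rewrite eq_sym.
- case/orP => [/eqP->|/imsetP[y]]; rewrite ?mem0v /=.
    rewrite /hdist; apply/cards1P; exists x; apply/setP => t.
    by rewrite !inE !mxE; case: (eqVneq x t); rewrite ?oner_eq0 ?eqxx.
  rewrite inE => Ry ->; have /and3P[H1 /eqP H2 /eqP H3] := fRP Ry; rewrite H1 /=.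
  have xy := R_neq Ry.
  rewrite /hdist; apply/cards1P; exists y; apply/setP => t; rewrite !inE !mxE.
  case: (eqVneq x t) => [<-|xt]; first by rewrite H2 eqxx (negbTE xy).
  case: (eqVneq t y) => [->|ty].
    have : y \in supp (fR x y) by rewrite H3 !inE eqxx orbT.
    by rewrite inE eq_sym.
  rewrite (notsupp (c := fR x y) (j := t)) ?eqxx //.
  by rewrite H3 !inE negb_or eq_sym xt ty.
Qed.

End Aux.

Theorem lemma3p6 (F : finFieldType) (n k na : nat) (C : {vspace 'rV[F]_n}) :
  \dim C = k ->
  min_dist_eq C 2 ->
  cov_radius C = 1%N ->
  completely_regular C ->
  (forall v : 'rV[F]_n, v \notin C -> n_at C v 1 = na) ->
  (k < n.-1)%N ->
  exists P : {set {set 'I_n}},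
    [/\ partition P [set: 'I_n],
        #|P| = (n %/ na)%N,
        (forall X, X \in P -> #|X| = na) &
        (forall c : 'rV[F]_n, c \in C -> wt c = 2%N ->
           exists2 X, X \in P & supp c \subset X)].
Proof.
move=> _ [_ md] _ _ Hna kn.
have eqv : {in [set: 'I_n] & &, equivalence_rel (E C)}.
  by move=> x y z _ _ _; apply: (E_equiv md).
set P := equivalence_partition (E C) [set: 'I_n].
have pP : partition P [set: 'I_n] := equivalence_partitionP eqv.
have blk : forall X, X \in P -> #|X| = na.
  move=> X /imsetP[x _ ->]; rewrite -(Hna _ (ev_notin md x)) (count_block md x).
  by apply: eq_card => y; rewrite !inE.
have n0 : (0 < n)%N by lia.
have na0 : (0 < na)%N.
  have x : 'I_n := Ordinal n0.
  rewrite -(blk [set y in [set: 'I_n] | E C x y]); last by apply: imset_f.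
  by apply/card_gt0P; exists x; rewrite !inE /E eqxx.
exists P; split => //.
- have hn : n = (#|P| * na)%N.
    rewrite -[n in LHS]card_ord -cardsT (card_partition pP).
    by rewrite (eq_bigr (fun _ => na)) ?sum_nat_const // => X /blk.
  transitivity (#|P| * na %/ na)%N; first by rewrite mulnK.
  by rewrite -hn.
- move=> c Hc /eqP/cards2P[i [j [ij sc]]].
  have : i \in supp c by rewrite sc !inE eqxx.
  rewrite inE => ci.
  have Rij : R C i j.
    apply/existsP; exists ((c 0 i)^-1 *: c)%R; apply/and3P; split.
    + by rewrite memvZ.
    + by rewrite mxE mulVf.
    + apply/eqP; rewrite -sc; apply/setP => t; rewrite !inE mxE.
      by rewrite mulf_eq0 invr_eq0 (negbTE ci).
  exists (pblock P i); first by apply: pblock_mem; case/and3P: pP => /eqP -> _ _; rewrite inE.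
  rewrite sc; apply/subsetP => t; rewrite !inE => /orP[] /eqP ->;
    rewrite (pblock_equivalence_partition eqv) ?inE //= /E ?eqxx ?Rij ?orbT //.
Qed.
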